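(* Let $H\in\mathcal{H}_2$, let $n\ge 1$ and $\boldsymbol\mu=(\mu_1,\dots,\mu_n)\in\mathbb{C}_+^n$, and let $P(\boldsymbol\mu)$ be the orthogonal projector of $\mathcal{H}_2$ onto $\mathcal{V}(\boldsymbol\mu)=\operatorname{span}\{v[\mu_j]\}_{j=1}^n$. Suppose $\mathcal{S}\subset\mathcal{H}_2$ admits a parameterization $H_r(\cdot;\boldsymbol\theta)$ such that $\mathcal{S}=\{H_r(\cdot;\boldsymbol\theta):\boldsymbol\theta\in\mathcal{D}\}$ with $\mathcal{D}\subset\mathbb{R}^p$ open. Let $$\mathcal{T}(\boldsymbol\theta)=\operatorname{span}\Big\{\tfrac{\partial H_r(\cdot,\boldsymbol\theta)}{\partial\theta_1},\dots,\tfrac{\partial H_r(\cdot,\boldsymbol\theta)}{\partial\theta_p}\Big\}.$$ If $H_r(\cdot,\widehat{\boldsymbol\theta})$ is a local optimizer of the projected problem $\min_{H_r\in\mathcal{S}}\|P(\boldsymbol\mu)[H-H_r]\|_{\mathcal{H}_2}^2$ and $\operatorname{Range}P(\boldsymbol\mu)\supseteq\mathcal{T}(\widehat{\boldsymbol\theta})$, then $H_r(\cdot,\widehat{\boldsymbol\theta})$ is also a local optimizer of the original problem $\min_{H_r\in\mathcal{S}}\|H-H_r\|_{\mathcal{H}_2}^2$.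
   Context: $\mathcal{H}_2$ denotes the Hilbert space of functions analytic in the right half-plane with inner product $\langle F,G\rangle_{\mathcal{H}_2}=\frac{1}{2\pi}\int_{-\infty}^{\infty}\overline{F(\mathrm{i}\omega)}G(\mathrm{i}\omega)\,d\omega$ and norm $\|F\|_{\mathcal{H}_2}^2=\langle F,F\rangle_{\mathcal{H}_2}$. $\mathbb{C}_+=\{\mu\in\mathbb{C}:\operatorname{Re}\mu>0\}$. For $\mu\in\mathbb{C}_+$, $v[\mu]\in\mathcal{H}_2$ is the reproducing kernel $v[\mu](z)=(z+\overline{\mu})^{-1}$, satisfying $\langle v[\mu],F\rangle_{\mathcal{H}_2}=F(\mu)$. Since $\mathcal{S}$ is nonconvex, ''local optimizer'' is understood in the sense of the first order optimality conditions: $H_r(\cdot,\widehat{\boldsymbol\theta})$ is a local optimizer of the projected problem if $\langle P(\boldsymbol\mu)[H-H_r(\cdot,\widehat{\boldsymbol\theta})],T\rangle_{\mathcal{H}_2}=0$ for all $T\in\mathcal{T}(\widehat{\boldsymbol\theta})$, and of the original problem if $\langle H-H_r(\cdot,\widehat{\boldsymbol\theta}),T\rangle_{\mathcal{H}_2}=0$ for all $T\in\mathcal{T}(\widehat{\boldsymbol\theta})$. *)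

(* Defs.v *)
From HB Require Import structures.
From mathcomp Require Import all_boot all_order all_algebra.
From mathcomp Require Import all_classical all_reals all_analysis.
From mathcomp Require Import complex.
Set Implicit Arguments. Unset Strict Implicit. Unset Printing Implicit Defensive.
Import Order.TTheory GRing.Theory Num.Theory.
Import numFieldNormedType.Exports.
Local Open Scope ring_scope.
Local Open Scope classical_set_scope.
Local Open Scope complex_scope.

Section H2Defs.
Variable R : realType.
Local Notation C := R[i].

Definition cpt (x w : R) : C := Complex x w.

Definition sqmod (z : C) : R := complex.Re z ^+ 2 + complex.Im z ^+ 2.
Definition cnorm (z : C) : R := Num.sqrt (sqmod z).

Definition rhp (z : C) : Prop := 0 < complex.Re z.

Definition cderivable (F : C -> C) (z : C) : Prop :=
  exists l : C, forall eps : R, 0 < eps -> exists2 del : R, 0 < del &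
    forall h : C, h != 0 -> cnorm h < del ->
      cnorm ((F (z + h) - F z) / h - l) < eps.

Definition bv_limit (F : C -> C) (w : R) (b : C) : Prop :=
  forall eps : R, 0 < eps -> exists2 del : R, 0 < del &
    forall x : R, 0 < x -> x < del -> cnorm (F (cpt x w) - b) < eps.

(* boundary value F(i w) := lim_{x -> 0+} F(x + i w) (arbitrary if no limit) *)
Definition bv (F : C -> C) (w : R) : C := xget 0 [set b | bv_limit F w b].


(* The last three clauses (a.e.
   existence of the boundary limit, its measurability and square
   integrability) are classical consequences (Fatou / Paley-Wiener),
   recorded explicitly so that the boundary inner product is meaningful. *)
Definition H2 (F : C -> C) : Prop :=
  [/\ (forall z, rhp z -> cderivable F z),
      (exists M : R, forall x : R, 0 < x ->
          (\int[@lebesgue_measure R]_(w in setT) (sqmod (F (cpt x w)))%:E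
            <= M%:E)%E),
      (exists N : set R, (@lebesgue_measure R).-negligible N /\
          forall w, ~ N w -> exists b, bv_limit F w b),
      measurable_fun setT (fun w => complex.Re (bv F w)) /\
      measurable_fun setT (fun w => complex.Im (bv F w)) &
      (@lebesgue_measure R).-integrable setT
          (fun w => (sqmod (bv F w))%:E)].

Definition h2ip (F G : C -> C) : C :=
  let f := fun w => (bv F w)^* * bv G w in
  ((2 * pi)^-1)%:C *
    Complex (Rintegral (@lebesgue_measure R) setT (fun w => complex.Re (f w)))
            (Rintegral (@lebesgue_measure R) setT (fun w => complex.Im (f w))).

Definition kern (mu : C) : C -> C := fun z => (z + mu^*)^-1.

Definition in_span (m : nat) (fs : 'I_m -> C -> C) (T : C -> C) : Prop :=
  exists c : 'I_m -> C, T = (fun z => \sum_(k < m) c k * fs k z).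

Definition h2eq (F G : C -> C) : Prop := forall z, rhp z -> F z = G z.

Definition is_orth_proj (n : nat) (mu : 'I_n -> C) (P : (C -> C) -> (C -> C))
  : Prop :=
  forall F, H2 F ->
    H2 (P F) /\ in_span (fun j => kern (mu j)) (P F) /\
    (forall j, h2ip (kern (mu j)) (fun z => F z - P F z) = 0).

Definition edir (p : nat) (k : 'I_p) : 'rV[R]_p := delta_mx 0 k.

Definition is_partial (p : nat) (Hr : 'rV[R]_p -> C -> C) (th : 'rV[R]_p)
  (k : 'I_p) (dH : C -> C) : Prop :=
  H2 dH /\
  (fun h : R =>
     let D := fun z => (Hr (th + h *: edir k) z - Hr th z) / h%:C - dH z in
     complex.Re (h2ip D D)) @ 0^' --> 0.

End H2Defs.

(* Main.v *)
Require Import Defs.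
From HB Require Import structures.
From mathcomp Require Import all_boot all_order all_algebra.
From mathcomp Require Import all_classical all_reals all_analysis.
From mathcomp Require Import complex.
From mathcomp Require Import ring lra.
From mathcomp Require Import measurable_realfun.
Set Implicit Arguments. Unset Strict Implicit. Unset Printing Implicit Defensive.
Import Order.TTheory GRing.Theory Num.Theory.
Import numFieldNormedType.Exports.
Local Open Scope ring_scope.
Local Open Scope classical_set_scope.

Local Open Scope complex_scope.
Section A.
Variable R : realType.
Local Notation C := R[i].

Lemma cnormE (z : C) : cnorm z = Normc.normc z.
Proof. by case: z. Qed.

Lemma cnorm_ge0 (z : C) : 0 <= cnorm z.
Proof. exact: sqrtr_ge0. Qed.

Lemma cnormD (a b : C) : cnorm (a + b) <= cnorm a + cnorm b.
Proof. rewrite !cnormE; exact: le_normcD. Qed.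

Lemma cnormM (a b : C) : cnorm (a * b) = cnorm a * cnorm b.
Proof. by rewrite !cnormE Normc.normcM. Qed.

Lemma cnormV (a : C) : cnorm (a^-1) = (cnorm a)^-1.
Proof. by rewrite !cnormE Normc.normcV. Qed.

Lemma cnormN (a : C) : cnorm (- a) = cnorm a.
Proof. by rewrite !cnormE normcN. Qed.

Lemma cnormB (a b : C) : cnorm (a - b) = cnorm (b - a).
Proof. by rewrite -cnormN opprB. Qed.

Lemma cnorm0 : cnorm (0 : C) = 0.
Proof. by rewrite cnormE Normc.normc0. Qed.

Lemma cnorm_eq0 (a : C) : cnorm a = 0 -> a = 0.
Proof. by rewrite cnormE => /Normc.eq0_normc. Qed.

Lemma Re_le (z : C) : `|complex.Re z| <= cnorm z.
Proof.
case: z => a b; rewrite /cnorm /sqmod /=.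
rewrite -sqrtr_sqr ler_sqrt ?lerDl ?sqr_ge0 //; by rewrite addr_ge0 ?sqr_ge0.
Qed.

Lemma Im_le (z : C) : `|complex.Im z| <= cnorm z.
Proof.
case: z => a b; rewrite /cnorm /sqmod /=.
rewrite -sqrtr_sqr ler_sqrt ?lerDr ?sqr_ge0 //; by rewrite addr_ge0 ?sqr_ge0.
Qed.

Lemma cnorm_le (z : C) : cnorm z <= `|complex.Re z| + `|complex.Im z|.
Proof.
case: z => a b; rewrite /cnorm /sqmod /=.
rewrite -(ger0_norm (addr_ge0 (normr_ge0 a) (normr_ge0 b))) -sqrtr_sqr ler_sqrt;
  last by rewrite exprn_ge0 // addr_ge0.
rewrite -(real_normK (num_real a)) -(real_normK (num_real b)).
have := normr_ge0 a; have := normr_ge0 b; nra.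
Qed.

Lemma sqmod_cnorm (z : C) : sqmod z = cnorm z ^+ 2.
Proof. by rewrite /cnorm sqr_sqrtr // /sqmod addr_ge0 ?sqr_ge0. Qed.

Lemma sqmod_ge0 (z : C) : 0 <= sqmod z.
Proof. by rewrite /sqmod addr_ge0 ?sqr_ge0. Qed.

Lemma Re_le_cnorm (z : C) : complex.Re z <= cnorm z.
Proof. exact: le_trans (ler_norm _) (Re_le z). Qed.

End A.

Local Close Scope complex_scope.
Local Open Scope complex_scope.
Section B.
Variable R : realType.
Local Notation C := R[i].

Lemma near_of_delta (w0 : R) (P : R -> Prop) (d : R) : 0 < d ->
  (forall w, `|w0 - w| < d -> P w) -> \forall w \near w0, P w.
Proof.
move=> d0 H; apply/nbhs_normP; exists d => //= w /=; exact: H.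
Qed.

Lemma cont_epsdelta (f : R -> R) :
  (forall w0 e, 0 < e -> exists2 d, 0 < d & forall w, `|w - w0| < d -> `|f w - f w0| < e) ->
  continuous f.
Proof.
move=> H w0; apply/cvgrPdist_lt => e e0.
have [d d0 Hd] := H w0 e e0.
apply: (near_of_delta d0) => w hw.
by rewrite distrC; apply: Hd; rewrite distrC.
Qed.

Definition Fcont (F : C -> C) := forall z, rhp z -> forall e : R, 0 < e ->
  exists2 d : R, 0 < d & forall h, cnorm h < d -> cnorm (F (z + h) - F z) < e.

Lemma cderiv_cont (F : C -> C) z : cderivable F z -> forall e : R, 0 < e ->
  exists2 d : R, 0 < d & forall h, cnorm h < d -> cnorm (F (z + h) - F z) < e.
Proof.
move=> [l Hl] e e0.
have [d1 d10 Hd1] := Hl 1 ltr01.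
set K := cnorm l + 1.
have K0 : 0 < K by rewrite /K ltr_wpDl // cnorm_ge0.
exists (Num.min d1 (e / K)); first by rewrite lt_min d10 divr_gt0.
move=> h; rewrite lt_min => /andP[hd1 hdK].
have [->|h0] := eqVneq h 0; first by rewrite addr0 subrr cnorm0.
have -> : F (z + h) - F z = h * ((F (z + h) - F z) / h).
  by rewrite mulrC -mulrA mulVf // mulr1.
rewrite cnormM.
have Hq : cnorm ((F (z + h) - F z) / h) <= K.
  have := Hd1 h h0 hd1.
  have := cnormD ((F (z + h) - F z) / h - l) l.
  rewrite subrK /K => ? ?; apply: (le_trans (y := cnorm ((F (z + h) - F z) / h - l) + cnorm l)) => //.
  by rewrite addrC lerD2l ltW.
apply: (le_lt_trans (y := cnorm h * K)).
  by apply: ler_wpM2l => //; exact: cnorm_ge0.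
by rewrite -ltr_pdivlMr.
Qed.

Lemma H2_Fcont F : H2 F -> Fcont F.
Proof. by case=> Hd _ _ _ _ z hz; exact: cderiv_cont (Hd z hz). Qed.

Lemma cpt_add x w x' w' : cpt x w + cpt x' w' = cpt (x + x') (w + w') :> C.
Proof. by []. Qed.

Lemma cnorm_cpt0 (w : R) : cnorm (cpt 0 w : C) = `|w|.
Proof. by rewrite /cnorm /sqmod /= expr0n /= add0r sqrtr_sqr. Qed.

Lemma cnorm_cpt0' (x : R) : cnorm (cpt x 0 : C) = `|x|.
Proof. by rewrite /cnorm /sqmod /= expr0n /= addr0 sqrtr_sqr. Qed.

Lemma Fcont_w (F : C -> C) x w0 e : Fcont F -> 0 < x -> 0 < e ->
  exists2 d, 0 < d & forall w, `|w - w0| < d -> cnorm (F (cpt x w) - F (cpt x w0)) < e.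
Proof.
move=> HF x0 e0; have [d d0 Hd] := HF (cpt x w0) x0 e e0.
exists d => // w hw.
have -> : cpt x w = cpt x w0 + cpt 0 (w - w0) :> C.
  by rewrite cpt_add addr0 addrC subrK.
by apply: Hd; rewrite cnorm_cpt0.
Qed.

Lemma Fcont_x (F : C -> C) x0 w e : Fcont F -> 0 < x0 -> 0 < e ->
  exists2 d, 0 < d & forall x, `|x - x0| < d -> cnorm (F (cpt x w) - F (cpt x0 w)) < e.
Proof.
move=> HF x0p e0; have [d d0 Hd] := HF (cpt x0 w) x0p e e0.
exists d => // x hx.
have -> : cpt x w = cpt x0 w + cpt (x - x0) 0 :> C.
  by rewrite cpt_add addr0 addrC subrK.
by apply: Hd; rewrite cnorm_cpt0'.
Qed.

Lemma cont_Re_line (F : C -> C) x : Fcont F -> 0 < x ->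
  continuous (fun w => complex.Re (F (cpt x w))).
Proof.
move=> HF x0; apply: cont_epsdelta => w0 e e0.
have [d d0 Hd] := Fcont_w w0 HF x0 e0; exists d => // w /Hd.
apply: le_lt_trans; rewrite -raddfB /=; exact: Re_le.
Qed.

Lemma cont_Im_line (F : C -> C) x : Fcont F -> 0 < x ->
  continuous (fun w => complex.Im (F (cpt x w))).
Proof.
move=> HF x0; apply: cont_epsdelta => w0 e e0.
have [d d0 Hd] := Fcont_w w0 HF x0 e0; exists d => // w /Hd.
apply: le_lt_trans; rewrite -raddfB /=; exact: Im_le.
Qed.

End B.

Local Close Scope complex_scope.
Local Open Scope complex_scope.
Section C3.
Variable R : realType.
Local Notation C := R[i].

Lemma le0_of_lt_all (t : R) : (forall e, 0 < e -> t < e) -> t <= 0.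
Proof. move=> H; rewrite leNgt; apply/negP => h; have := H _ h; by rewrite ltxx. Qed.

Lemma two_deltas (d1 d2 : R) : 0 < d1 -> 0 < d2 ->
  exists x, [/\ 0 < x, x < d1 & x < d2].
Proof.
move=> h1 h2; exists (Num.min d1 d2 / 2).
have hm : 0 < Num.min d1 d2 by rewrite lt_min h1 h2.
have hl : Num.min d1 d2 <= d1 by rewrite ge_min lexx.
have hr : Num.min d1 d2 <= d2 by rewrite ge_min lexx orbT.
split; [by rewrite divr_gt0 | lra | lra].
Qed.

Lemma bv_limit_uniq (F : C -> C) w a b : bv_limit F w a -> bv_limit F w b -> a = b.
Proof.
move=> Ha Hb; apply/eqP; rewrite -subr_eq0; apply/eqP/cnorm_eq0.
apply/le_anti; rewrite cnorm_ge0 andbT; apply: le0_of_lt_all => e e0.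
have e2 : 0 < e / 2 by rewrite divr_gt0.
have [d1 d10 H1] := Ha _ e2; have [d2 d20 H2] := Hb _ e2.
have [x [x0 x1 x2]] := two_deltas d10 d20.
have := H1 x x0 x1; have := H2 x x0 x2.
have := cnormD (a - F (cpt x w)) (F (cpt x w) - b).
rewrite [cnorm (a - _)]cnormB addrA subrK => ? ? ?; lra.
Qed.

Lemma bvE (F : C -> C) w b : bv_limit F w b -> bv F w = b.
Proof.
move=> Hb; rewrite /bv; apply: xget_unique => // y Hy.
exact: bv_limit_uniq Hy Hb.
Qed.

Lemma bv0 (F : C -> C) w : (forall b, ~ bv_limit F w b) -> bv F w = 0.
Proof. by move=> H; rewrite /bv; apply: xgetPN. Qed.

Lemma bv_limit_ext (F G : C -> C) w b : (forall z, rhp z -> F z = G z) ->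
  bv_limit F w b -> bv_limit G w b.
Proof.
move=> E H e e0; have [d d0 Hd] := H e e0; exists d => // x x0 xd.
by rewrite -E //; apply: Hd.
Qed.

Lemma bv_ext (F G : C -> C) : (forall z, rhp z -> F z = G z) -> bv F = bv G.
Proof.
move=> E; apply/funext => w; rewrite /bv; congr (xget 0 _).
apply/funext => b; apply/propext; split; apply: bv_limit_ext => // z hz.
by rewrite E.
Qed.

Lemma bv_limitD (F G : C -> C) w a b : bv_limit F w a -> bv_limit G w b ->
  bv_limit (fun z => F z + G z) w (a + b).
Proof.
move=> Ha Hb e e0.
have e2 : 0 < e / 2 by rewrite divr_gt0.
have [d1 d10 H1] := Ha _ e2; have [d2 d20 H2] := Hb _ e2.
exists (Num.min d1 d2); first by rewrite lt_min d10 d20.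
move=> x x0; rewrite lt_min => /andP[x1 x2].
have := H1 x x0 x1; have := H2 x x0 x2.
have := cnormD (F (cpt x w) - a) (G (cpt x w) - b).
have -> : F (cpt x w) - a + (G (cpt x w) - b) = F (cpt x w) + G (cpt x w) - (a + b).
  by rewrite opprD !addrA; congr (_ + _); rewrite addrAC.
move=> ? ? ?; lra.
Qed.

Lemma bv_limitZ (F : C -> C) w a c : bv_limit F w a ->
  bv_limit (fun z => c * F z) w (c * a).
Proof.
move=> Ha e e0.
have K0 : 0 < cnorm c + 1 by rewrite ltr_wpDl // cnorm_ge0.
have [d d0 Hd] := Ha (e / (cnorm c + 1)) (divr_gt0 e0 K0).
exists d => // x x0 xd; rewrite -mulrBr cnormM.
have := Hd x x0 xd => h.
apply: (le_lt_trans (y := (cnorm c + 1) * cnorm (F (cpt x w) - a))).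
  by apply: ler_wpM2r; [exact: cnorm_ge0 | rewrite lerDl].
by rewrite mulrC -ltr_pdivlMr.
Qed.

Lemma bv_limitN (F : C -> C) w a : bv_limit F w a ->
  bv_limit (fun z => - F z) w (- a).
Proof.
move=> Ha e e0; have [d d0 Hd] := Ha e e0; exists d => // x x0 xd.
by rewrite -opprD cnormN; apply: Hd.
Qed.

Lemma bv_limitB (F G : C -> C) w a b : bv_limit F w a -> bv_limit G w b ->
  bv_limit (fun z => F z - G z) w (a - b).
Proof. by move=> Ha Hb; apply: bv_limitD => //; apply: bv_limitN. Qed.

Lemma bv_limit_sum m (fs : 'I_m -> C -> C) (bs : 'I_m -> C) w :
  (forall k, bv_limit (fs k) w (bs k)) ->
  bv_limit (fun z => \sum_(k < m) fs k z) w (\sum_(k < m) bs k).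
Proof.
elim: m fs bs => [|m IH] fs bs H.
  move=> e e0; exists 1 => // x _ _; rewrite !big_ord0 subrr cnorm0 //.
have H1 := IH (fun k => fs (widen_ord (leqnSn m) k)) (fun k => bs (widen_ord (leqnSn m) k)) (fun k => H _).
have H2 := bv_limitD H1 (H ord_max).
move=> e e0; have [d d0 Hd] := H2 e e0; exists d => // x x0 xd.
by rewrite !big_ord_recr /=; apply: Hd.
Qed.

Lemma Re_conjc (z : C) : complex.Re (z^*) = complex.Re z.
Proof. by case: z. Qed.

Lemma Re_kern_pos (mu z : C) : 0 < complex.Re mu -> 0 <= complex.Re z ->
  complex.Re mu <= complex.Re (z + mu^*).
Proof. by case: mu => a b; case: z => c d /= ? ?; rewrite lerDr. Qed.

Lemma cnormV_le (u : C) (a : R) : 0 < a -> a <= complex.Re u -> cnorm (u^-1) <= a^-1.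
Proof.
move=> a0 au; rewrite cnormV lef_pV2 ?posrE //.
  exact: le_trans au (Re_le_cnorm u).
by apply: lt_le_trans (Re_le_cnorm u); apply: lt_le_trans au.
Qed.

Lemma bv_limit_kern (mu : C) w : rhp mu ->
  bv_limit (kern mu) w (kern mu (cpt 0 w)).
Proof.
rewrite /rhp => m0 e e0; set a := complex.Re mu.
exists (e * a ^+ 2); first by rewrite mulr_gt0 // exprn_gt0.
move=> x x0 xd; rewrite /kern.
set u := cpt x w + mu^*; set v := cpt 0 w + mu^*.
have hu : a <= complex.Re u by apply: Re_kern_pos => //=; exact: ltW.
have hv : a <= complex.Re v by apply: Re_kern_pos => //=.
have uv0 : u != 0.
  by apply/eqP => u0; move: hu; rewrite u0 /=; lra.
have vv0 : v != 0.
  by apply/eqP => v0; move: hv; rewrite v0 /=; lra.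
have -> : u^-1 - v^-1 = (v - u) * (u^-1 * v^-1).
  by rewrite mulrBl mulrCA divff // mulr1 mulrA divff // mul1r.
have -> : v - u = - cpt x 0.
  rewrite /u /v opprD addrACA subrr addr0.
  by change (Complex (0 - x) (w - w) = Complex (-x) (-0) :> C); rewrite sub0r subrr oppr0.
rewrite cnormM cnormN cnorm_cpt0' cnormM gtr0_norm //.
apply: (le_lt_trans (y := x * (a^-1 * a^-1))).
  apply: ler_wpM2l; first exact: ltW.
  by apply: ler_pM; rewrite ?cnorm_ge0 ?cnormV_le.
have a0 : a != 0 by rewrite gt_eqF.
have -> : x * (a^-1 * a^-1) = x / (a ^+ 2) by rewrite expr2 invfM.
by rewrite ltr_pdivrMr ?exprn_gt0.
Qed.

Lemma bv_kern (mu : C) w : rhp mu -> bv (kern mu) w = kern mu (cpt 0 w).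
Proof. by move=> m0; apply: bvE; apply: bv_limit_kern. Qed.

End C3.

Local Close Scope complex_scope.
Section D4.
Variable R : realType.

Definition rr (n : nat) : R := (n.+1%:R)^-1.

Lemma rr_gt0 n : 0 < rr n.
Proof. by rewrite /rr invr_gt0 ltr0n. Qed.

Lemma rr_le m n : (m <= n)%N -> rr n <= rr m.
Proof. by move=> h; rewrite /rr lef_pV2 ?posrE ?ltr0n // ler_nat ltnS. Qed.

Lemma rr_small e : 0 < e -> exists k, rr k < e.
Proof.
move=> e0; exists (Num.truncn (e^-1)); rewrite /rr -[ltRHS]invrK ltf_pV2 ?posrE ?ltr0n ?invr_gt0 //.
exact: truncnS_gt.
Qed.

Lemma rat_between (a b : R) : a < b -> exists q : rat, a < ratr q < b.
Proof. by move=> /rat_in_itvoo[q]; rewrite in_itv /=; exists q. Qed.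

Lemma bigcap_rat_measurable (F : rat -> set R) :
  (forall q, measurable (F q)) -> measurable (\bigcap_q F q).
Proof.
move=> mF; rewrite -[X in measurable X]setCK setC_bigcap; apply: measurableC.
by apply: bigcupT_measurable_rat => q; apply: measurableC.
Qed.

Lemma le_set_measurable (g : R -> R) c : measurable_fun setT g ->
  measurable [set w | g w <= c].
Proof.
move=> mg; have := mg measurableT _ (measurable_itv `]-oo, c]%O).
rewrite setTI; congr measurable; apply/funext => w /=.
Qed.

Variable u : R -> R -> R.
Hypothesis cw : forall x, 0 < x -> continuous (u x).
Hypothesis cx : forall w x0 e, 0 < x0 -> 0 < e ->
  exists2 d, 0 < d & forall x, 0 < x -> `|x - x0| < d -> `|u x w - u x0 w| < e.

Definition haslim w c := forall e, 0 < e ->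
  exists2 d, 0 < d & forall x, 0 < x -> x < d -> `|u x w - c| < e.
Definition limset := [set w | exists c, haslim w c].
Definition Scond k m (q q' : rat) := [set w : R | 0 < (ratr q : R) -> ratr q < rr m -> 0 < (ratr q' : R) ->
  ratr q' < rr m -> `|u (ratr q) w - u (ratr q') w| <= rr k].
Definition Ccond w := forall k, exists m, forall q q', Scond k m q q' w.

Lemma Scond_meas k m q q' : measurable (Scond k m q q').
Proof.
have [h|h] := boolP [&& (0 < (ratr q : R)), ratr q < rr m, (0 < (ratr q' : R)) & ratr q' < rr m].
  move/and4P: h => [h1 h2 h3 h4].
  have -> : Scond k m q q' = [set w | `|u (ratr q) w - u (ratr q') w| <= rr k].
    by apply/funext => w; apply/propext; split => /= H //; move=> *; exact: H.
  apply: le_set_measurable; apply: measurableT_comp; first exact: normr_measurable.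
  by apply: measurable_funB; apply: continuous_measurable_fun; apply: cw.
have -> : Scond k m q q' = setT; last exact: measurableT.
apply/funext => w; apply/propext; split => // _ /= a b c d.
by move: h; rewrite a b c d.
Qed.

Lemma Ccond_meas : measurable [set w | Ccond w].
Proof.
have -> : [set w | Ccond w] = \bigcap_k \bigcup_m \bigcap_q \bigcap_q' Scond k m q q'.
  apply/funext => w; apply/propext; split => /= H.
    move=> k _; have [m Hm] := H k; exists m => // q _ q' _; exact: Hm.
  move=> k; have [m _ Hm] := H k I; exists m => q q'; exact: Hm.
apply: bigcapT_measurable => k; apply: bigcupT_measurable => m.
apply: bigcap_rat_measurable => q; apply: bigcap_rat_measurable => q'.
exact: Scond_meas.
Qed.

Lemma limset_C w : limset w -> Ccond w.
Proof.
move=> [c Hc] k.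
have e0 : 0 < rr k / 2 by rewrite divr_gt0 // rr_gt0.
have [d d0 Hd] := Hc _ e0; have [m hm] := rr_small d0.
exists m => q q' h1 h2 h3 h4.
have := Hd _ h1 (lt_trans h2 hm); have := Hd _ h3 (lt_trans h4 hm).
have := ler_normB (u (ratr q) w - c) (u (ratr q') w - c).
rewrite opprB addrA subrK => ? ? ?; lra.
Qed.

Lemma approx_rat (x lo hi d : R) : lo < x -> x < hi -> 0 < d ->
  exists q : rat, [/\ lo < ratr q, ratr q < hi & `|ratr q - x| < d].
Proof.
move=> h1 h2 d0.
have : Num.max lo (x - d) < Num.min hi (x + d).
  by rewrite gt_max !lt_min; apply/andP; split; apply/andP; split; lra.
move=> /rat_between [q /andP[]]; rewrite gt_max lt_min => /andP[a b] /andP[c e].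
by exists q; split => //; rewrite ltr_distl; apply/andP; split; lra.
Qed.

Lemma Ccond_real w : Ccond w -> forall k, exists m, forall x x', 0 < x -> x < rr m -> 0 < x' ->
  x' < rr m -> `|u x w - u x' w| <= rr k.
Proof.
move=> HC k; have [m Hm] := HC k; exists m => x x' x0 xm x'0 x'm.
rewrite leNgt; apply/negP => hgt.
set g := `|u x w - u x' w| - rr k.
have g0 : 0 < g / 2 by rewrite divr_gt0 // subr_gt0.
have [d1 d10 H1] := cx w x0 g0; have [d2 d20 H2] := cx w x'0 g0.
have [q [q1 q2 q3]] := approx_rat x0 xm d10.
have [q' [q'1 q'2 q'3]] := approx_rat x'0 x'm d20.
have := Hm q q' q1 q2 q'1 q'2.
have := H1 _ q1 q3; have := H2 _ q'1 q'3.
have := ler_normD (u x w - u (ratr q) w) (u (ratr q) w - u x' w).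
have := ler_normD (u (ratr q) w - u (ratr q') w) (u (ratr q') w - u x' w).
rewrite !addrA !subrK.
have e1 := distrC (u x w) (u (ratr q) w).
rewrite /g => ? ? ? ? ?; lra.
Qed.

End D4.
Arguments rr {R}. Arguments rr_gt0 {R}. Arguments rr_le {R m n}. Arguments rr_small {R e}.

Section D5.
Variable R : realType.

Lemma rr_lt m n : (m < n)%N -> (rr n : R) < rr m.
Proof. by move=> h; rewrite /rr ltf_pV2 ?posrE ?ltr0n // ltr_nat ltnS. Qed.

Variable u : R -> R -> R.
Hypothesis cw : forall x, 0 < x -> continuous (u x).
Hypothesis cx : forall w x0 e, 0 < x0 -> 0 < e ->
  exists2 d, 0 < d & forall x, 0 < x -> `|x - x0| < d -> `|u x w - u x0 w| < e.

Lemma C_limset w : Ccond u w -> limset u w.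
Proof.
move=> HC; have HR := Ccond_real cx HC.
set s := fun n => u (rr n) w.
have cs : cauchy_ex (s @ \oo).
  move=> e e0; have [k hk] := rr_small e0; have [m Hm] := HR k.
  exists (s m.+1); exists m.+1 => // n /= hn.
  rewrite /ball /=.
  apply: le_lt_trans hk; apply: Hm; rewrite ?rr_gt0 //.
    exact: rr_lt.
  by apply: le_lt_trans (rr_le hn) _; exact: rr_lt.
have : cvg (s @ \oo) by apply/cauchy_cvgP/cauchy_exP.
move=> /cvg_ex [c sc]; exists c => e e0.
have e2 : 0 < e / 2 by rewrite divr_gt0.
have [k hk] := rr_small e2; have [m Hm] := HR k.
exists (rr m); first exact: rr_gt0.
move=> x x0 xm.
have [N _ HN] := (iffLR (cvgrPdist_lt _ _) sc) _ e2.
set n := maxn N m.+1.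
have hn : `|c - s n| < e / 2 by apply: HN; rewrite /= leq_maxl.
have hr : (rr n : R) < rr m.
  have := @rr_le R _ _ (leq_maxr N m.+1); have := @rr_lt m m.+1 (ltnSn m); rewrite -/n => ? ?; lra.
have h1 := Hm x (rr n) x0 xm (rr_gt0 n) hr.
have h2 := ler_normD (u x w - u (rr n) w) (u (rr n) w - c).
rewrite addrA subrK in h2.
have E1 := distrC c (u (rr n) w).
rewrite /s in hn; lra.
Qed.

Lemma haslim_seq w c : haslim u w c -> (fun n => u (rr n) w) @ \oo --> c.
Proof.
move=> H; apply/cvgrPdist_lt => e e0.
have [d d0 Hd] := H e e0; have [k hk] := rr_small d0.
exists k => // n /= hn; rewrite distrC; apply: Hd; first exact: rr_gt0.
exact: le_lt_trans (rr_le hn) hk.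
Qed.

Lemma limset_meas : measurable (limset u).
Proof.
have -> : limset u = [set w | Ccond u w].
  apply/funext => w; apply/propext; split; [exact: limset_C | exact: C_limset].
exact: Ccond_meas.
Qed.

Lemma meas_lim (g : R -> R) :
  (forall w, limset u w -> exists2 c, haslim u w c & g w = c) ->
  (forall w, ~ limset u w -> g w = 0) -> measurable_fun setT g.
Proof.
move=> H1 H0; have mL := limset_meas.
rewrite -(setUv (limset u)); apply/measurable_funU => //; first exact: measurableC.
split.
  apply: (measurable_fun_cvg (h := fun m w => u (rr m) w)).
    move=> m; apply: measurable_funTS; apply: continuous_measurable_fun.
    exact: cw (rr_gt0 m).
  move=> w Lw; have [c hc ->] := H1 w Lw; exact: haslim_seq.
apply: (eq_measurable_fun (cst (0:R))); last exact: measurable_cst.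
by move=> w; rewrite inE => /H0 ->.
Qed.

End D5.
Arguments rr_lt {R m n}.

Local Open Scope complex_scope.
Section E6.
Variable R : realType.
Local Notation C := R[i].

Lemma meas_lim2 (u : R -> R -> R) (A : set R) (g : R -> R) :
  (forall x, 0 < x -> continuous (u x)) -> measurable A ->
  (forall w, A w -> exists2 c, haslim u w c & g w = c) ->
  (forall w, ~ A w -> g w = 0) -> measurable_fun setT g.
Proof.
move=> cw mA H1 H0.
rewrite -(setUv A); apply/measurable_funU => //; first exact: measurableC.
split.
  apply: (measurable_fun_cvg (h := fun m w => u (rr m) w)).
    move=> m; apply: measurable_funTS; apply: continuous_measurable_fun.
    exact: cw (rr_gt0 m).
  move=> w Lw; have [c hc ->] := H1 w Lw; exact: haslim_seq.
apply: (eq_measurable_fun (cst (0:R))); last exact: measurable_cst.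
by move=> w; rewrite inE => /H0 ->.
Qed.

Variable F : C -> C.
Hypothesis HF : Fcont F.

Let ure x w := complex.Re (F (cpt x w)).
Let uim x w := complex.Im (F (cpt x w)).

Let cw_re x : 0 < x -> continuous (ure x).
Proof. exact: cont_Re_line. Qed.
Let cw_im x : 0 < x -> continuous (uim x).
Proof. exact: cont_Im_line. Qed.

Let cx_re w x0 e : 0 < x0 -> 0 < e ->
  exists2 d, 0 < d & forall x, 0 < x -> `|x - x0| < d -> `|ure x w - ure x0 w| < e.
Proof.
move=> x0p e0; have [d d0 Hd] := Fcont_x w HF x0p e0; exists d => // x _ /Hd.
apply: le_lt_trans; rewrite /ure -raddfB /=; exact: Re_le.
Qed.
Let cx_im w x0 e : 0 < x0 -> 0 < e ->
  exists2 d, 0 < d & forall x, 0 < x -> `|x - x0| < d -> `|uim x w - uim x0 w| < e.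
Proof.
move=> x0p e0; have [d d0 Hd] := Fcont_x w HF x0p e0; exists d => // x _ /Hd.
apply: le_lt_trans; rewrite /uim -raddfB /=; exact: Im_le.
Qed.

Let A := limset ure `&` limset uim.
Let mA : measurable A.
Proof. by apply: measurableI; apply: limset_meas; [exact: cw_re|exact: cx_re|exact: cw_im|exact: cx_im]. Qed.

Let limA w c1 c2 : haslim ure w c1 -> haslim uim w c2 -> bv_limit F w (Complex c1 c2).
Proof.
move=> H1 H2 e e0.
have e2 : 0 < e / 2 by rewrite divr_gt0.
have [d1 d10 K1] := H1 _ e2; have [d2 d20 K2] := H2 _ e2.
exists (Num.min d1 d2); first by rewrite lt_min d10 d20.
move=> x x0; rewrite lt_min => /andP[xd1 xd2].
have := K1 x x0 xd1; have := K2 x x0 xd2.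
have := cnorm_le (F (cpt x w) - Complex c1 c2).
rewrite /ure /uim; case: (F (cpt x w)) => a b /= ? ? ?; lra.
Qed.

Let notA w b : bv_limit F w b -> A w.
Proof.
move=> H; split.
  exists (complex.Re b) => e e0; have [d d0 Hd] := H e e0; exists d => // x x0 xd.
  apply: le_lt_trans (Hd x x0 xd); rewrite /ure -raddfB /=; exact: Re_le.
exists (complex.Im b) => e e0; have [d d0 Hd] := H e e0; exists d => // x x0 xd.
apply: le_lt_trans (Hd x x0 xd); rewrite /uim -raddfB /=; exact: Im_le.
Qed.

Lemma bv_meas_Re : measurable_fun setT (fun w => complex.Re (bv F w)).
Proof.
apply: (@meas_lim2 ure A _ cw_re mA).
  move=> w [[c1 h1] [c2 h2]]; exists c1 => //.
  by rewrite (bvE (limA h1 h2)).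
move=> w nA; rewrite bv0 // => b /notA; exact: nA.
Qed.

Lemma bv_meas_Im : measurable_fun setT (fun w => complex.Im (bv F w)).
Proof.
apply: (@meas_lim2 uim A _ cw_im mA).
  move=> w [[c1 h1] [c2 h2]]; exists c2 => //.
  by rewrite (bvE (limA h1 h2)).
move=> w nA; rewrite bv0 // => b /notA; exact: nA.
Qed.

End E6.

Local Close Scope complex_scope.
Local Open Scope complex_scope.
Section F7.
Variable R : realType.
Local Notation C := R[i].
Local Notation mu := (@lebesgue_measure R).

Definition L2m (f : R -> C) :=
  [/\ measurable_fun setT (fun w => complex.Re (f w)),
      measurable_fun setT (fun w => complex.Im (f w)) &
      mu.-integrable setT (fun w => (sqmod (f w))%:E)].

Definition ipb (f g : R -> C) : C :=
  ((2 * pi)^-1)%:C *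
    Complex (Rintegral mu setT (fun w => complex.Re ((f w)^* * g w)))
            (Rintegral mu setT (fun w => complex.Im ((f w)^* * g w))).

Lemma h2ipE (F G : C -> C) : h2ip F G = ipb (bv F) (bv G).
Proof. by []. Qed.

Lemma Re_cm (a b : C) : complex.Re (a^* * b) = complex.Re a * complex.Re b + complex.Im a * complex.Im b.
Proof. by case: a => x y; case: b => u v /=; ring. Qed.

Lemma Im_cm (a b : C) : complex.Im (a^* * b) = complex.Re a * complex.Im b - complex.Im a * complex.Re b.
Proof. by case: a => x y; case: b => u v /=; ring. Qed.

Lemma absRe_cm (a b : C) : `|complex.Re (a^* * b)| <= sqmod a + sqmod b.
Proof.
rewrite Re_cm /sqmod; case: a => x y; case: b => u v /=.
have := sqr_ge0 (x - u); have := sqr_ge0 (x + u); have := sqr_ge0 (y - v); have := sqr_ge0 (y + v).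
rewrite !sqrrB !sqrrD => ? ? ? ?.
rewrite ler_norml; apply/andP; split; lra.
Qed.

Lemma absIm_cm (a b : C) : `|complex.Im (a^* * b)| <= sqmod a + sqmod b.
Proof.
rewrite Im_cm /sqmod; case: a => x y; case: b => u v /=.
have := sqr_ge0 (x - v); have := sqr_ge0 (x + v); have := sqr_ge0 (y - u); have := sqr_ge0 (y + u).
rewrite !sqrrB !sqrrD => ? ? ? ?.
rewrite ler_norml; apply/andP; split; lra.
Qed.

Lemma meas_sqmod (f : R -> C) : measurable_fun setT (fun w => complex.Re (f w)) ->
  measurable_fun setT (fun w => complex.Im (f w)) ->
  measurable_fun setT (fun w => sqmod (f w)).
Proof.
move=> h1 h2; rewrite /sqmod; apply: measurable_funD; exact: measurable_funX.
Qed.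

Lemma int_cm (f g : R -> C) : L2m f -> L2m g ->
  mu.-integrable setT (EFin \o (fun w => complex.Re ((f w)^* * g w))) /\
  mu.-integrable setT (EFin \o (fun w => complex.Im ((f w)^* * g w))).
Proof.
move=> [f1 f2 f3] [g1 g2 g3].
have iS : mu.-integrable setT (fun w => (sqmod (f w) + sqmod (g w))%:E).
  exact: (integrableD measurableT f3 g3).
split.
  apply: (le_integrable measurableT _ _ iS).
    apply/measurable_EFinP; under eq_fun do rewrite Re_cm.
    by apply: measurable_funD; apply: measurable_funM.
  move=> w _ /=; rewrite lee_fin (le_trans (absRe_cm _ _)) //.
  by rewrite ger0_norm // addr_ge0 // sqmod_ge0.
apply: (le_integrable measurableT _ _ iS).
  apply/measurable_EFinP; under eq_fun do rewrite Im_cm.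
  by apply: measurable_funB; apply: measurable_funM.
move=> w _ /=; rewrite lee_fin (le_trans (absIm_cm _ _)) //.
by rewrite ger0_norm // addr_ge0 // sqmod_ge0.
Qed.

End F7.

Local Close Scope complex_scope.
Local Open Scope complex_scope.
Section G8.
Variable R : realType.
Local Notation C := R[i].
Local Notation mu := (@lebesgue_measure R).

Lemma intL (a b : R) (p q : R -> R) :
  mu.-integrable setT (EFin \o p) -> mu.-integrable setT (EFin \o q) ->
  mu.-integrable setT (EFin \o (fun w => a * p w + b * q w)).
Proof.
move=> ip iq.
apply: (eq_integrable measurableT _ _ _ (integrableD measurableT (integrableZl measurableT a ip) (integrableZl measurableT b iq))).
by move=> w _ /=; rewrite EFinD !EFinM.
Qed.

Lemma RintL (a b : R) (p q : R -> R) :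
  mu.-integrable setT (EFin \o p) -> mu.-integrable setT (EFin \o q) ->
  Rintegral mu setT (fun w => a * p w + b * q w) =
  a * Rintegral mu setT p + b * Rintegral mu setT q.
Proof.
move=> ip iq.
have ia : mu.-integrable setT (EFin \o (fun w => a * p w)).
  apply: (eq_integrable measurableT _ _ _ (integrableZl measurableT a ip)) => w _ /=; by rewrite EFinM.
have ib : mu.-integrable setT (EFin \o (fun w => b * q w)).
  apply: (eq_integrable measurableT _ _ _ (integrableZl measurableT b iq)) => w _ /=; by rewrite EFinM.
rewrite (RintegralD measurableT ia ib).
by rewrite (RintegralZl _ measurableT ip) (RintegralZl _ measurableT iq).
Qed.

Lemma Re_lin (a c b1 b2 : C) : complex.Re (a^* * (c * b1 + b2)) =
  complex.Re c * complex.Re (a^* * b1) + 1 * (1 * complex.Re (a^* * b2) + (- complex.Im c) * complex.Im (a^* * b1)).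
Proof. by case: a => ? ?; case: c => ? ?; case: b1 => ? ?; case: b2 => ? ? /=; ring. Qed.

Lemma Im_lin (a c b1 b2 : C) : complex.Im (a^* * (c * b1 + b2)) =
  complex.Re c * complex.Im (a^* * b1) + 1 * (1 * complex.Im (a^* * b2) + complex.Im c * complex.Re (a^* * b1)).
Proof. by case: a => ? ?; case: c => ? ?; case: b1 => ? ?; case: b2 => ? ? /=; ring. Qed.

Lemma ipb_lin (f g1 g2 : R -> C) (c : C) : L2m f -> L2m g1 -> L2m g2 ->
  ipb f (fun w => c * g1 w + g2 w) = c * ipb f g1 + ipb f g2.
Proof.
move=> Lf L1 L2.
have [r1 i1] := int_cm Lf L1; have [r2 i2] := int_cm Lf L2.
rewrite /ipb.
under eq_Rintegral do rewrite Re_lin.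
rewrite (RintL _ _ r1 (intL 1 _ r2 i1)) (RintL _ _ r2 i1).
under [X in Complex _ X]eq_Rintegral do rewrite Im_lin.
rewrite (RintL _ _ i1 (intL 1 _ i2 r1)) (RintL _ _ i2 r1).
move: (Rintegral _ _ _) (Rintegral _ _ _) (Rintegral _ _ _) (Rintegral _ _ _) => A B D E.
case: c => cr ci /=; congr Complex; ring.
Qed.

Lemma ipb_conj (f g : R -> C) : L2m f -> L2m g -> ipb g f = (ipb f g)^*.
Proof.
move=> Lf Lg; have [r1 i1] := int_cm Lf Lg.
rewrite /ipb.
have E1 : forall w, complex.Re ((g w)^* * f w) = complex.Re ((f w)^* * g w).
  by move=> w; rewrite !Re_cm; ring.
have E2 : forall w, complex.Im ((g w)^* * f w) = (-1) * complex.Im ((f w)^* * g w).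
  by move=> w; rewrite !Im_cm; ring.
under eq_Rintegral do rewrite E1.
under [X in Complex _ X]eq_Rintegral do rewrite E2.
rewrite (RintegralZl _ measurableT i1).
move: (Rintegral _ _ _) (Rintegral _ _ (fun w => complex.Im _)) => A B.
rewrite /= ; congr Complex; ring.
Qed.

End G8.

Local Close Scope complex_scope.
Local Open Scope complex_scope.
Section H9.
Variable R : realType.
Local Notation C := R[i].
Local Notation mu := (@lebesgue_measure R).

Lemma Re_lin2 (c b1 b2 : C) : complex.Re (c * b1 + b2) =
  complex.Re c * complex.Re b1 + ((- complex.Im c) * complex.Im b1 + complex.Re b2).
Proof. by case: c => ? ?; case: b1 => ? ?; case: b2 => ? ? /=; ring. Qed.

Lemma Im_lin2 (c b1 b2 : C) : complex.Im (c * b1 + b2) =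
  complex.Re c * complex.Im b1 + (complex.Im c * complex.Re b1 + complex.Im b2).
Proof. by case: c => ? ?; case: b1 => ? ?; case: b2 => ? ? /=; ring. Qed.

Lemma sqmod_lin (c b1 b2 : C) : sqmod (c * b1 + b2) <= 2 * sqmod c * sqmod b1 + 2 * sqmod b2.
Proof.
rewrite /sqmod; case: c => p q; case: b1 => x y; case: b2 => u v /=.
set A := p * x - q * y; set B := p * y + q * x.
have hA : A ^+ 2 + B ^+ 2 = (p ^+ 2 + q ^+ 2) * (x ^+ 2 + y ^+ 2) by rewrite /A /B; ring.
have := sqr_ge0 (A - u); have := sqr_ge0 (B - v).
have e1 : p * x - q * y + u = A + u by [].
have e2 : p * y + q * x + v = B + v by [].
rewrite e1 e2 !sqrrB !sqrrD => ? ?.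
have -> : 2 * (p ^+ 2 + q ^+ 2) * (x ^+ 2 + y ^+ 2) = 2 * (A ^+ 2 + B ^+ 2) by rewrite hA mulrA.
lra.
Qed.

Lemma L2m_lin (g1 g2 : R -> C) (c : C) : L2m g1 -> L2m g2 -> L2m (fun w => c * g1 w + g2 w).
Proof.
move=> [a1 b1 i1] [a2 b2 i2].
have mRe : measurable_fun setT (fun w => complex.Re (c * g1 w + g2 w)).
  under eq_fun do rewrite Re_lin2.
  apply: measurable_funD; first exact: measurable_funM.
  by apply: measurable_funD => //; exact: measurable_funM.
have mIm : measurable_fun setT (fun w => complex.Im (c * g1 w + g2 w)).
  under eq_fun do rewrite Im_lin2.
  apply: measurable_funD; first exact: measurable_funM.
  by apply: measurable_funD => //; exact: measurable_funM.
split => //.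
have iD := @intL R (2 * sqmod c) 2 (fun w => sqmod (g1 w)) (fun w => sqmod (g2 w)) i1 i2.
apply: (le_integrable measurableT _ _ iD).
  by apply/measurable_EFinP; exact: meas_sqmod.
move=> w _ /=; rewrite lee_fin !ger0_norm ?sqmod_ge0 ?sqmod_lin //.
by rewrite addr_ge0 // mulr_ge0 // ?mulr_ge0 // sqmod_ge0.
Qed.

Lemma L2m_sum m (c : 'I_m -> C) (gs : 'I_m -> R -> C) : (forall k, L2m (gs k)) ->
  L2m (fun w => \sum_(k < m) c k * gs k w).
Proof.
elim: m c gs => [|m IH] c gs H.
  under eq_fun do rewrite big_ord0.
  split.
  - exact: measurable_cst.
  - exact: measurable_cst.
  - apply: (eq_integrable measurableT (cst 0%E)); last exact: integrable0.
    by move=> w _; rewrite /sqmod /= expr0n /= addr0.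
under eq_fun do rewrite big_ord_recr /= addrC.
apply: L2m_lin => //.
exact: (IH (fun k => c (widen_ord (leqnSn m) k)) (fun k => gs (widen_ord (leqnSn m) k))).
Qed.

Lemma ipb0 (f : R -> C) : ipb f (fun _ => 0) = 0.
Proof.
rewrite /ipb.
have E : forall w, complex.Re ((f w)^* * 0) = 0 by move=> w; rewrite mulr0.
have E' : forall w, complex.Im ((f w)^* * 0) = 0 by move=> w; rewrite mulr0.
under eq_Rintegral do rewrite E.
under [X in Complex _ X]eq_Rintegral do rewrite E'.
rewrite /Rintegral integral0 /=.
by apply/eqP; rewrite eq_complex /= !mulr0 !subrr !addr0 eqxx.
Qed.

Lemma ipb_sum (f : R -> C) m (c : 'I_m -> C) (gs : 'I_m -> R -> C) : L2m f ->
  (forall k, L2m (gs k)) ->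
  ipb f (fun w => \sum_(k < m) c k * gs k w) = \sum_(k < m) c k * ipb f (gs k).
Proof.
move=> Lf; elim: m c gs => [|m IH] c gs H.
  under eq_fun do rewrite big_ord0.
  by rewrite ipb0 big_ord0.
under eq_fun do rewrite big_ord_recr /= addrC.
rewrite (ipb_lin _ Lf (H ord_max) (@L2m_sum m (fun k => c (widen_ord (leqnSn m) k)) (fun k => gs (widen_ord (leqnSn m) k)) (fun k => H _))).
rewrite big_ord_recr /= addrC.
by rewrite (IH (fun k => c (widen_ord (leqnSn m) k)) (fun k => gs (widen_ord (leqnSn m) k))).
Qed.

Lemma ipb_ae (f g g' : R -> C) (N : set R) :
  measurable_fun setT (fun w => complex.Re (f w)) ->
  measurable_fun setT (fun w => complex.Im (f w)) ->
  measurable_fun setT (fun w => complex.Re (g w)) ->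
  measurable_fun setT (fun w => complex.Im (g w)) ->
  measurable_fun setT (fun w => complex.Re (g' w)) ->
  measurable_fun setT (fun w => complex.Im (g' w)) ->
  mu.-negligible N -> (forall w, ~ N w -> g w = g' w) ->
  ipb f g = ipb f g'.
Proof.
move=> fr fi gr gi g'r g'i HN Hg.
have key : forall (h : C -> C -> R),
   (forall a b, h a b = complex.Re (a^* * b)) \/ (forall a b, h a b = complex.Im (a^* * b)) ->
   Rintegral mu setT (fun w => h (f w) (g w)) = Rintegral mu setT (fun w => h (f w) (g' w)).
  move=> h Hh; rewrite /Rintegral; congr fine.
  have mh : forall g0 : R -> C, measurable_fun setT (fun w => complex.Re (g0 w)) ->
      measurable_fun setT (fun w => complex.Im (g0 w)) ->
      measurable_fun setT (fun w => (h (f w) (g0 w))%:E).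
    move=> g0 h1 h2; apply/measurable_EFinP.
    case: Hh => Hh; under eq_fun do rewrite Hh.
      by rewrite /=; under eq_fun do rewrite Re_cm; apply: measurable_funD; apply: measurable_funM.
    by rewrite /=; under eq_fun do rewrite Im_cm; apply: measurable_funB; apply: measurable_funM.
  apply: ae_eq_integral => //; [exact: mh | exact: mh |].
  apply: (negligibleS _ HN) => w /= nP; apply: contrapT => nN; apply: nP => _.
  by rewrite (Hg w nN).
rewrite /ipb.
rewrite (key (fun a b => complex.Re (a^* * b))); last by left.
by rewrite (key (fun a b => complex.Im (a^* * b))); last by right.
Qed.

End H9.

Local Close Scope complex_scope.
Local Open Scope complex_scope.
Section I10.
Variable R : realType.
Local Notation C := R[i].
Local Notation mu := (@lebesgue_measure R).

Lemma sqmod_sub (a b : C) : sqmod (a - b) <= 2 * sqmod a + 2 * sqmod b.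
Proof.
rewrite /sqmod; case: a => x y; case: b => u v /=.
have := sqr_ge0 (x + u); have := sqr_ge0 (y + v).
rewrite !sqrrB !sqrrD => ? ?; lra.
Qed.

Lemma cderivableB (F G : C -> C) z : cderivable F z -> cderivable G z ->
  cderivable (fun z => F z - G z) z.
Proof.
move=> [lF HF] [lG HG]; exists (lF - lG) => e e0.
have e2 : 0 < e / 2 by rewrite divr_gt0.
have [d1 d10 H1] := HF _ e2; have [d2 d20 H2] := HG _ e2.
exists (Num.min d1 d2); first by rewrite lt_min d10 d20.
move=> h h0; rewrite lt_min => /andP[hd1 hd2].
have := H1 h h0 hd1; have := H2 h h0 hd2.
set qF := (F (z + h) - F z) / h - lF; set qG := (G (z + h) - G z) / h - lG.
have -> : (F (z + h) - G (z + h) - (F z - G z)) / h - (lF - lG) = qF - qG.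
  rewrite /qF /qG; ring.
have := cnormD qF (- qG); rewrite cnormN => ? ? ?; lra.
Qed.

Lemma meas_line (F : C -> C) x : Fcont F -> 0 < x ->
  measurable_fun setT (fun w => (sqmod (F (cpt x w)))%:E).
Proof.
move=> HF x0; apply/measurable_EFinP; apply: meas_sqmod.
  by apply: continuous_measurable_fun; exact: cont_Re_line.
by apply: continuous_measurable_fun; exact: cont_Im_line.
Qed.

Lemma H2B (F G : C -> C) : H2 F -> H2 G -> H2 (fun z => F z - G z).
Proof.
move=> hF hG; have cF := H2_Fcont hF; have cG := H2_Fcont hG.
case: hF => dF [M1 HM1] [N1 [nN1 LN1]] [mF1 mF2] iF.
case: hG => dG [M2 HM2] [N2 [nN2 LN2]] [mG1 mG2] iG.
have dE : forall z, rhp z -> cderivable (fun z => F z - G z) z.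
  by move=> z hz; apply: cderivableB; [exact: dF | exact: dG].
have cE : Fcont (fun z => F z - G z) by move=> z hz; exact: cderiv_cont (dE z hz).
have aeE : forall w, ~ (N1 `|` N2) w -> bv (fun z => F z - G z) w = bv F w - bv G w.
  move=> w hw.
  have hw1 : ~ N1 w by move=> h; apply: hw; left.
  have hw2 : ~ N2 w by move=> h; apply: hw; right.
  have [b1 hb1] := LN1 w hw1; have [b2 hb2] := LN2 w hw2.
  by rewrite (bvE hb1) (bvE hb2); apply: bvE; apply: bv_limitB.
split => //.
- exists (2 * M1 + 2 * M2) => x x0.
  apply: (@le_trans _ _ (\int[mu]_(w in setT) ((2 * sqmod (F (cpt x w)) + 2 * sqmod (G (cpt x w)))%:E))%E).
    apply: ge0_le_integral => //.
    + by move=> w _; rewrite lee_fin sqmod_ge0.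
    + exact: (meas_line cE x0).
    + apply/measurable_EFinP; apply: measurable_funD; apply: measurable_funM => //;
        apply/measurable_EFinP; [exact: (meas_line cF x0) | exact: (meas_line cG x0)].
    + by move=> w _; rewrite lee_fin sqmod_sub.
  under eq_integral do rewrite EFinD !EFinM.
  rewrite ge0_integralD //; last 4 first.
  + by move=> w _; rewrite mule_ge0 // lee_fin sqmod_ge0.
  + by apply: measurable_funeM; exact: (meas_line cF x0).
  + by move=> w _; rewrite mule_ge0 // lee_fin sqmod_ge0.
  + by apply: measurable_funeM; exact: (meas_line cG x0).
  rewrite ge0_integralZl //; last 2 first.
  + exact: (meas_line cF x0).
  + by move=> w _; rewrite lee_fin sqmod_ge0.
  rewrite ge0_integralZl //; last 2 first.
  + exact: (meas_line cG x0).
  + by move=> w _; rewrite lee_fin sqmod_ge0.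
  rewrite (EFinD (2 * M1)) (EFinM 2 M1) (EFinM 2 M2); apply: leeD; apply: lee_wpmul2l => //; [exact: HM1 | exact: HM2].
- exists (N1 `|` N2); split; first exact: negligibleU.
  move=> w hw; exists (bv F w - bv G w).
  have hw1 : ~ N1 w by move=> h; apply: hw; left.
  have hw2 : ~ N2 w by move=> h; apply: hw; right.
  have [b1 hb1] := LN1 w hw1; have [b2 hb2] := LN2 w hw2.
  by rewrite (bvE hb1) (bvE hb2); apply: bv_limitB.
- by split; [exact: bv_meas_Re | exact: bv_meas_Im].
- have mE : measurable_fun setT (fun w => (sqmod (bv (fun z => F z - G z) w))%:E).
    by apply/measurable_EFinP; apply: meas_sqmod; [exact: bv_meas_Re | exact: bv_meas_Im].
  have iD := @intL R 2 2 (fun w => sqmod (bv F w)) (fun w => sqmod (bv G w)) iF iG.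
  apply/integrableP; split => //.
  apply: le_lt_trans (proj2 (integrableP _ _ _ iD)).
  apply: ae_ge0_le_integral => //.
  + by apply: measurableT_comp.
  + by apply: measurableT_comp => //; case/integrableP: iD.
  + apply: (negligibleS _ (negligibleU nN1 nN2)) => w /= nP.
    apply: contrapT => nN; apply: nP => _.
    rewrite (aeE w nN) /= lee_fin !ger0_norm ?sqmod_ge0 ?sqmod_sub //.
    by rewrite addr_ge0 // mulr_ge0 // sqmod_ge0.
Qed.

End I10.

Local Close Scope complex_scope.
Local Open Scope complex_scope.
Section J11.
Variable R : realType.
Local Notation C := R[i].
Local Notation mu := (@lebesgue_measure R).

Lemma inv_diff (u v : C) (a : R) : 0 < a -> a <= complex.Re u -> a <= complex.Re v ->
  cnorm (u^-1 - v^-1) <= cnorm (v - u) / a ^+ 2.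
Proof.
move=> a0 hu hv.
have uv0 : u != 0 by apply/eqP => u0; move: hu; rewrite u0 /=; lra.
have vv0 : v != 0 by apply/eqP => v0; move: hv; rewrite v0 /=; lra.
have -> : u^-1 - v^-1 = (v - u) * (u^-1 * v^-1).
  by rewrite mulrBl mulrCA divff // mulr1 mulrA divff // mul1r.
rewrite cnormM cnormM.
have -> : cnorm (v - u) / a ^+ 2 = cnorm (v - u) * (a^-1 * a^-1) by rewrite expr2 invfM.
apply: ler_wpM2l; first exact: cnorm_ge0.
by apply: ler_pM; rewrite ?cnorm_ge0 ?cnormV_le.
Qed.

Lemma kern_cont (m : C) : rhp m ->
  forall w0 e, 0 < e -> exists2 d, 0 < d & forall w, `|w - w0| < d ->
    cnorm (kern m (cpt 0 w) - kern m (cpt 0 w0)) < e.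
Proof.
rewrite /rhp => m0 w0 e e0; set a := complex.Re m.
exists (e * a ^+ 2); first by rewrite mulr_gt0 // exprn_gt0.
move=> w hw; rewrite /kern.
apply: le_lt_trans (inv_diff m0 _ _) _.
- by apply: Re_kern_pos => //=.
- by apply: Re_kern_pos => //=.
have -> : cpt 0 w0 + m^* - (cpt 0 w + m^*) = cpt 0 (w0 - w) :> C.
  rewrite opprD addrACA subrr addr0.
  by change (Complex (0 - 0) (w0 - w) = Complex 0 (w0 - w) :> C); rewrite subrr.
rewrite cnorm_cpt0 distrC ltr_pdivrMr ?exprn_gt0 //.
Qed.

Lemma kern_cont_Re (m : C) : rhp m -> continuous (fun w => complex.Re (kern m (cpt 0 w))).
Proof.
move=> hm; apply: cont_epsdelta => w0 e e0.
have [d d0 Hd] := kern_cont hm w0 e0; exists d => // w /Hd.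
by apply: le_lt_trans; rewrite -raddfB /=; exact: Re_le.
Qed.

Lemma kern_cont_Im (m : C) : rhp m -> continuous (fun w => complex.Im (kern m (cpt 0 w))).
Proof.
move=> hm; apply: cont_epsdelta => w0 e e0.
have [d d0 Hd] := kern_cont hm w0 e0; exists d => // w /Hd.
by apply: le_lt_trans; rewrite -raddfB /=; exact: Im_le.
Qed.

Lemma integrable_oneDsqrV : mu.-integrable setT (fun w => ((@oneDsqr R w)^-1)%:E).
Proof.
have f0 : forall x : R, 0 <= (oneDsqr x)^-1.
  by move=> x; rewrite invr_ge0 /oneDsqr addr_ge0 // sqr_ge0.
have cf : continuous (fun x : R => (oneDsqr x)^-1) by exact: continuous_oneDsqrV.
apply/integrableP; split.
  by apply/measurable_EFinP; exact: continuous_measurable_fun.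
under eq_integral do rewrite gee0_abs ?lee_fin //.
rewrite ge0_symfun_integralT //; last first.
  by move=> x /=; rewrite /oneDsqr sqrrN.
rewrite -set_itvcy.
rewrite (@ge0_continuous_FTC2y _ _ atan 0 (pi / 2)) //.
- by rewrite atan0 -EFinB -EFinM ltry.
- by apply: continuous_subspaceT.
- exact: cvgy_atan.
- by apply: cvg_at_right_filter; exact: continuous_atan.
- by move=> x _; rewrite derive1_atan.
Qed.

Lemma sqmodV (z : C) : sqmod (z^-1) = (sqmod z)^-1.
Proof. by rewrite !sqmod_cnorm cnormV exprVn. Qed.

Lemma L2m_kern (m : C) : rhp m -> L2m (bv (kern m)).
Proof.
move=> hm.
have -> : bv (kern m) = fun w => kern m (cpt 0 w).
  by apply/funext => w; rewrite bv_kern.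
split.
- by apply: continuous_measurable_fun; exact: kern_cont_Re.
- by apply: continuous_measurable_fun; exact: kern_cont_Im.
move: hm; rewrite /rhp; case: m => a b /= a0.
set K := 2 + (1 + 2 * b ^+ 2) / a ^+ 2.
have K0 : 0 < K by rewrite /K ltr_wpDr // divr_ge0 // ?sqr_ge0 // addr_ge0 // mulr_ge0 // sqr_ge0.
apply: (le_integrable measurableT _ _ (integrableZl measurableT K integrable_oneDsqrV)).
  apply/measurable_EFinP; apply: meas_sqmod.
    by apply: continuous_measurable_fun; exact: (kern_cont_Re (m := Complex a b)).
  by apply: continuous_measurable_fun; exact: (kern_cont_Im (m := Complex a b)).
move=> w _ /=.
rewrite lee_fin (ger0_norm (sqmod_ge0 _)) ger0_norm; last first.
  by rewrite divr_ge0 ?(ltW K0) // /oneDsqr addr_ge0 // sqr_ge0.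
rewrite /kern sqmodV.
have -> : sqmod (cpt 0 w + (Complex a b)^*) = a ^+ 2 + (w - b) ^+ 2.
  by rewrite /sqmod /= add0r.
set n := a ^+ 2 + (w - b) ^+ 2.
have n0 : 0 < n by rewrite /n ltr_pwDl // ?sqr_ge0 // exprn_gt0.
have d0 : 0 < oneDsqr w by rewrite /oneDsqr ltr_pwDl // sqr_ge0.
rewrite -[K * _]invrK invfM invrK lef_pV2 ?posrE ?mulr_gt0 ?invr_gt0 //.
rewrite ler_pdivrMl //.
have a20 : 0 < a ^+ 2 by rewrite exprn_gt0.
have hK : K * a ^+ 2 = 2 * a ^+ 2 + (1 + 2 * b ^+ 2).
  by rewrite /K mulrDl -mulrA mulVf ?mulr1 // gt_eqF.
rewrite /oneDsqr /n.
have := sqr_ge0 (w - 2 * b).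
rewrite mulrDr hK; rewrite !sqrrB !exprMn => ?.
have := sqr_ge0 a; have := sqr_ge0 b => ? ?.
have hK2 : 0 <= K - 2.
  by rewrite /K addrAC subrr add0r divr_ge0 // ?sqr_ge0 // addr_ge0 // mulr_ge0 // sqr_ge0.
have h3 := mulr_ge0 hK2 (sqr_ge0 (w - b)).
rewrite sqrrB in h3.
lra.
Qed.

End J11.

Local Close Scope complex_scope.

Lemma bv_span (R : realType) n (mu : 'I_n -> R[i]) (e : 'I_n -> R[i]) :
  (forall j, rhp (mu j)) ->
  bv (fun z => \sum_(k < n) e k * kern (mu k) z) =
  (fun w => \sum_(k < n) e k * bv (kern (mu k)) w).
Proof.
move=> Hmu; apply/funext => w; apply: bvE.
have -> : \sum_(k < n) e k * bv (kern (mu k)) w = \sum_(k < n) e k * kern (mu k) (cpt 0 w).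
  by apply: eq_bigr => k _; rewrite bv_kern.
apply: (bv_limit_sum (fs := fun k z => e k * kern (mu k) z)) => k.
by apply: bv_limitZ; apply: bv_limit_kern.
Qed.

Lemma H2_L2m (R : realType) (F : R[i] -> R[i]) : H2 F -> L2m (bv F).
Proof. by case=> _ _ _ [m1 m2] i. Qed.

Theorem lemma1p1 (R : realType) (H : R[i] -> R[i]) (n : nat)
  (mu : 'I_n -> R[i]) (P : (R[i] -> R[i]) -> (R[i] -> R[i]))
  (p : nat) (D : set 'rV[R]_p) (Hr : 'rV[R]_p -> R[i] -> R[i])
  (thhat : 'rV[R]_p) (dH : 'I_p -> R[i] -> R[i]) :
  H2 H -> (1 <= n)%N -> (forall j, rhp (mu j)) ->
  is_orth_proj mu P ->
  open D -> (forall th, D th -> H2 (Hr th)) ->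
  D thhat ->
  (forall k, is_partial Hr thhat k (dH k)) ->
  (* local optimizer of the projected problem (first-order conditions) *)
  (forall T, in_span dH T ->
     h2ip (P (fun z => H z - Hr thhat z)) T = 0) ->
  (* Range P(mu) contains T(thhat) *)
  (forall T, in_span dH T -> exists2 G, H2 G & h2eq (P G) T) ->
  (* local optimizer of the original problem *)
  forall T, in_span dH T -> h2ip (fun z => H z - Hr thhat z) T = 0.
Proof.
move=> HH _ Hmu HP _ HD Dth _ Hopt Hrange T hT.
set E := fun z => H z - Hr thhat z.
have HE : H2 E := H2B HH (HD thhat Dth).
have [HPE [[c hc] Horth]] := HP E HE.
have [G HG hPG] := Hrange T hT.
have [HPG [[e he] _]] := HP G HG.
have bvT : bv T = fun w => \sum_(k < n) e k * bv (kern (mu k)) w.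
  rewrite -(bv_ext (F := P G)); last by move=> z hz; rewrite hPG.
  by rewrite he bv_span.
have LE := H2_L2m HE; have LPE := H2_L2m HPE.
have LK : forall k, L2m (bv (kern (mu k))) by move=> k; exact: L2m_kern.
have key : forall k, ipb (bv E) (bv (kern (mu k))) = ipb (bv (P E)) (bv (kern (mu k))).
  move=> k.
  have HEP : H2 (fun z => E z - P E z) := H2B HE HPE.
  have LEP := H2_L2m HEP.
  have Lg' : L2m (fun w => (-1) * bv (P E) w + bv E w) := L2m_lin (-1) LPE LE.
  case: (HE) => _ _ [N1 [nN1 LN1]] _ _.
  case: (HPE) => _ _ [N2 [nN2 LN2]] _ _.
  have h0 := Horth k; rewrite h2ipE in h0.
  have := h0.
  case: LEP => m1 m2 _; case: (Lg') => m1' m2' _; case: (LK k) => mk1 mk2 _.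
  rewrite (ipb_ae (g' := fun w => (-1) * bv (P E) w + bv E w) mk1 mk2 m1 m2 m1' m2'
     (negligibleU nN1 nN2)); last first.
    move=> w hw.
    have hw1 : ~ N1 w by move=> h; apply: hw; left.
    have hw2 : ~ N2 w by move=> h; apply: hw; right.
    have [b1 hb1] := LN1 w hw1; have [b2 hb2] := LN2 w hw2.
    rewrite (bvE hb1) (bvE hb2); apply: bvE.
    have -> : -1 * b2 + b1 = b1 - b2 by rewrite mulN1r addrC.
    exact: bv_limitB.
  rewrite (ipb_lin (-1) (LK k) LPE LE) => /eqP; rewrite mulN1r addrC subr_eq0 => /eqP EQ.
  by rewrite (ipb_conj (LK k) LE) (ipb_conj (LK k) LPE) EQ.
have h := Hopt T hT.
rewrite h2ipE bvT (ipb_sum e LPE LK) in h.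
rewrite h2ipE bvT (ipb_sum e LE LK) -[RHS]h.
by apply: eq_bigr => k _; rewrite key.
Qed.
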